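(* Let $\mathcal{T}=(V,A,E,f,q,v_0)$ be a decorated rooted tree that has negative determinants and satisfies $f(A)\subseteq\mathbb{N}=\{0,1,2,\dots\}$. (a) If $v,v'\in V$ satisfy $v<v'$, then: (i) if $N_v<0$ then $N_{v'}<0$; (ii) if $N_v\le0$ then $N_{v'}\le0$; (iii) if $N_v\le0$ and there exists $\alpha\in A\setminus A_0$ with $\alpha>v'$, then $N_{v'}<0$. (b) The set $\{v\in V: N_v\ge0\}$ is connected. (c) The set $\{v\in V: N_v>0\}$ is connected.
   Context: A graph is a pair $(X_0,X_1)$ of finite sets such that each element of $X_1$ (an edge) is a $2$-element subset of $X_0$; elements of $X_0$ are cells. A path is a tuple $(x_0,\dots,x_n)$ ($n\ge0$) of cells with $\{x_i,x_{i+1}\}$ an edge for each $i<n$, these edges pairwise distinct; a cell/edge is in the path if it is some $x_i$ / some $\{x_i,x_{i+1}\}$. The graph is a tree if any two cells $x,y$ are joined by a unique path $\gamma_{x,y}$. A decorated tree is $(V,A,E,f,q)$ with $V$ (vertices), $A$ (arrows) finite disjoint sets, $(V\cup A,E)$ a tree, every arrow contained in exactly one edge, $f:A\to\mathbb{Z}$, $q(e,x)\in\mathbb{Z}$ for each $e\in E$, $x\in e$, with $q(e,\alpha)=1$ for $\alpha\in A$, and for each $v\in V$ and distinct edges $e,e'\ni v$, $\gcd(q(e,v),q(e',v))=1$. $A_0=\{\alpha\in A:f(\alpha)=0\}$. For $x\in V\cup A$, $e\ni x$: $Q(e,x)=\prod q(e',x)$ over edges $e'\ne e$ containing $x$ (empty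 product $=1$); for an edge $e=\{x,y\}$, $\det(e)=q(e,x)q(e,y)-Q(e,x)Q(e,y)$. An edge $\varepsilon$ is incident to a path $\gamma$ if it is not in $\gamma$ but contains a cell $u$ of $\gamma$; $q(\varepsilon,\gamma):=q(\varepsilon,u)$. For $v\ne\alpha$, $v\in V\cup A$, $\alpha\in A$: $x_{v,\alpha}=f(\alpha)\prod_\varepsilon q(\varepsilon,\gamma_{v,\alpha})$ over edges incident to $\gamma_{v,\alpha}$. For $v\in V\cup A_0$, $N_v=\sum_{\alpha\in A\setminus A_0}x_{v,\alpha}$. A root of $(V,A,E,f,q)$ is a vertex $v_0$ with $q(e,v_0)=1$ for every edge $e\ni v_0$ such that for every $v\in V\setminus\{v_0\}$, all edges $e\ni v$ not in $\gamma_{v_0,v}$ satisfy $q(e,v)\ge1$ and at most one of them satisfies $q(e,v)\ne1$. A decorated rooted tree is $(V,A,E,f,q,v_0)$ with $v_0$ a root. For distinct $x,y\in V\cup A$, $x<y$ means $x$ is in $\gamma_{v_0,y}$. $\mathcal{T}$ has negative determinants if $\det(e)<0$ for every edge $e=\{x,y\}$ with $x,y\in V$. A subset $S\subseteq V\cup A$ is connected if every path $(x_0,\dots,x_n)$ with $x_0,x_n\in S$ has $x_i\in S$ for all $0<i<n$. *)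

(* Defs.v *)
From Stdlib Require Import ClassicalEpsilon.
From HB Require Import structures.
From mathcomp Require Import all_boot all_order all_algebra.
Set Implicit Arguments. Unset Strict Implicit. Unset Printing Implicit Defensive.
Import Order.TTheory GRing.Theory Num.Theory.
Local Open Scope ring_scope.

Section DecoratedTrees.
Variable T : finType.
Implicit Types (V A : {set T}) (E : {set {set T}}) (f : T -> int)
  (q : {set T} -> T -> int).

Definition pedges (x : T) (s : seq T) : seq {set T} :=
  pairmap (fun a b => [set a; b]) x s.

Definition is_path E (p : seq T) : bool :=
  if p is x :: s then all (fun e => e \in E) (pedges x s) && uniq (pedges x s)
  else false.

Definition path_edges (p : seq T) : seq {set T} :=
  if p is x :: s then pedges x s else [::].

Definition path_from E (x y : T) (p : seq T) : Prop :=
  [/\ is_path E p, head x p = x & last x p = y].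

Definition is_tree (X : {set T}) E : Prop :=
  (forall e, e \in E -> (e \subset X) /\ #|e| = 2%N) /\
  forall x y, x \in X -> y \in X -> exists! p : seq T, path_from E x y p.

Definition gamma E (x y : T) : seq T :=
  epsilon (inhabits [::]) (fun p => path_from E x y p).

Definition decorated_tree V A E f q : Prop :=
  [/\ [disjoint V & A] /\ V :|: A = [set: T], is_tree [set: T] E,
      (forall a, a \in A -> #|[set e in E | a \in e]| = 1%N),
      (forall e a, e \in E -> a \in A -> a \in e -> q e a = 1) &
      (forall v e e', v \in V -> e \in E -> e' \in E -> e != e' ->
         v \in e -> v \in e' -> coprimez (q e v) (q e' v))].

Definition Qf E q (e : {set T}) (x : T) : int :=
  \prod_(e' in E | (x \in e') && (e' != e)) q e' x.

Definition detf E q (x y : T) : int :=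
  let e := [set x; y] in q e x * q e y - Qf E q e x * Qf E q e y.

Definition incident E (eps : {set T}) (g : seq T) : bool :=
  [&& eps \in E, eps \notin path_edges g & has (fun u => u \in eps) g].

(* q(eps, gamma) := q(eps, u) for the cell u of gamma in eps *)
Definition qinc q (eps : {set T}) (g : seq T) : int :=
  oapp (q eps) 1 [pick u | (u \in g) && (u \in eps)].

Definition xf E f q (v a : T) : int :=
  let g := gamma E v a in
  f a * \prod_(eps in E | incident E eps g) qinc q eps g.

Definition Nf A E f q (v : T) : int :=
  \sum_(a in A | f a != 0) xf E f q v a.

Definition is_root V A E f q (v0 : T) : Prop :=
  [/\ v0 \in V,
      (forall e, e \in E -> v0 \in e -> q e v0 = 1) &
      forall v, v \in V -> v != v0 ->
        (forall e, e \in E -> v \in e -> e \notin path_edges (gamma E v0 v) ->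
            1 <= q e v) /\
        (#|[set e in E | [&& v \in e, e \notin path_edges (gamma E v0 v)
                            & q e v != 1]]| <= 1)%N].

Definition decorated_rooted_tree V A E f q v0 : Prop :=
  decorated_tree V A E f q /\ is_root V A E f q v0.

(* x < y : x is in gamma_{v0,y} (x, y distinct) *)
Definition tlt E (v0 x y : T) : bool := (x != y) && (x \in gamma E v0 y).

Definition negative_determinants V E q : Prop :=
  forall x y, x \in V -> y \in V -> [set x; y] \in E -> detf E q x y < 0.

Definition connected E (S : {set T}) : Prop :=
  forall (x : T) (s : seq T), is_path E (x :: s) -> x \in S -> last x s \in S ->
    forall i, (0 < i < size s)%N -> nth x (x :: s) i \in S.

End DecoratedTrees.

(* Main.v *)
Require Import Defs.
From Stdlib Require Import ClassicalEpsilon.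
From HB Require Import structures.
From mathcomp Require Import all_boot all_order all_algebra.
Set Implicit Arguments. Unset Strict Implicit. Unset Printing Implicit Defensive.
Import Order.TTheory GRing.Theory Num.Theory.
From mathcomp Require Import zify ring.

Section Paths.
Variable T : finType.
Variable E : {set {set T}}.

Lemma pedges_take (x : T) s k : pedges x (take k s) = take k (pedges x s).
Proof. by elim: s x k => [|y s IH] x [|k] //=; rewrite /pedges /= -IH. Qed.

Lemma pedges_rcons (x : T) s y : pedges x (rcons s y) = rcons (pedges x s) [set last x s; y].
Proof. by rewrite /pedges -cats1 pairmap_cat cats1. Qed.

Lemma path_take (x : T) s k : is_path E (x :: s) -> is_path E (x :: take k s).
Proof.
rewrite /= pedges_take => /andP[Ha Hu]; apply/andP; split.
  by apply/allP => e /mem_take; exact: (allP Ha).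
exact: take_uniq.
Qed.

Lemma path_behead (x y : T) s : is_path E (x :: y :: s) -> is_path E (y :: s).
Proof. by rewrite /= => /andP[/andP[_ ?] /andP[_ ?]]; apply/andP. Qed.

Lemma path_drop (p : seq T) k : is_path E p -> (k < size p)%N -> is_path E (drop k p).
Proof.
elim: k p => [|k IH] p; first by rewrite drop0.
case: p => [|x [|y s]] //= Hp Hk.
by apply: IH => //; exact: path_behead Hp.
Qed.

Lemma mem_pedges (x : T) s e c : e \in pedges x s -> c \in e -> c \in x :: s.
Proof.
elim: s x => [|y s IH] x //= He Hc.
move: He; rewrite in_cons => /orP[/eqP Heq | He].
  move: Hc; rewrite Heq in_set2 !in_cons => /orP[->|->] //; by rewrite orbT.
by rewrite in_cons (IH y He Hc) orbT.
Qed.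

Lemma path_from_cons (x : T) s : is_path E (x :: s) -> path_from E x (last x s) (x :: s).
Proof. by move=> H; split. Qed.



Lemma pedges_rev (x : T) s : pedges (last x s) (rev (belast x s)) = rev (pedges x s).
Proof.
elim: s x => [|y s IH] x //=.
rewrite rev_cons pedges_rcons IH /pedges /= rev_cons.
congr rcons.
have -> : last (last y s) (rev (belast y s)) = y.
  case: s {IH} => [|z s] //=. by rewrite rev_cons last_rcons.
by rewrite setUC.
Qed.

Lemma path_rev (p : seq T) : is_path E p -> is_path E (rev p).
Proof.
case: p => [|x s] //.
move=> H; rewrite (lastI x s) rev_rcons /= pedges_rev all_rev rev_uniq.
exact: H.
Qed.

Hypothesis Htree : is_tree [set: T] E.

Lemma gammaP x y : path_from E x y (gamma E x y).
Proof.
rewrite /gamma; apply: epsilon_spec.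
have [p [Hp _]] := Htree.2 x y (in_setT x) (in_setT y).
by exists p.
Qed.

Lemma path_unique x y p1 p2 : path_from E x y p1 -> path_from E x y p2 -> p1 = p2.
Proof.
move=> H1 H2.
have [p [Hp Hu]] := Htree.2 x y (in_setT x) (in_setT y).
by rewrite -(Hu _ H1) -(Hu _ H2).
Qed.

Lemma gamma_eq x y p : path_from E x y p -> gamma E x y = p.
Proof. move=> H; apply: path_unique H; exact: gammaP. Qed.

Lemma gamma_path x y : is_path E (gamma E x y).
Proof. by case: (gammaP x y). Qed.

Lemma gamma_cons x y : exists s, gamma E x y = x :: s /\ last x s = y.
Proof.
case: (gammaP x y); case: (gamma E x y) => [|z s] //= _ Hz Hl.
by exists s; rewrite -Hz Hl.
Qed.

Lemma edge_card e : e \in E -> #|e| = 2%N.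
Proof. by move=> He; case: (Htree.1 e He). Qed.

Lemma edge_other e z : e \in E -> exists2 c, c \in e & c != z.
Proof.
move=> /edge_card /eqP /cards2P [a [b [Hab ->]]].
case: (eqVneq a z) => [Ha|Ha]; last by exists a; rewrite ?in_set2 ?eqxx.
by exists b; rewrite ?in_set2 ?eqxx ?orbT // -Ha eq_sym.
Qed.

Lemma edge_eq e a b : e \in E -> a \in e -> b \in e -> a != b -> e = [set a; b].
Proof.
move=> /edge_card /eqP /cards2P [c [d [Hcd ->]]].
rewrite !in_set2 => /orP[]/eqP-> /orP[]/eqP->; rewrite ?eqxx // => _.
by rewrite setUC.
Qed.

Lemma take_index_rcons (y : T) s : y \in s ->
  take (index y s).+1 s = rcons (take (index y s) s) y.
Proof. by move=> ys; rewrite (take_nth y) ?index_mem // nth_index. Qed.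

Lemma path_notin x s : is_path E (x :: s) -> x \notin s.
Proof.
move=> Hp; apply/negP => xs.
have Hp' := path_take (index x s).+1 Hp.
have H1 : path_from E x x (x :: take (index x s).+1 s).
  split => //=. by rewrite take_index_rcons // last_rcons.
have H2 : path_from E x x [:: x] by [].
have := path_unique H1 H2; rewrite take_index_rcons //.
by case: (take _ _).
Qed.

Lemma path_uniq p : is_path E p -> uniq p.
Proof.
elim: p => [|x s IH] // Hp.
rewrite /= path_notin //.
case: s IH Hp => [|y s] IH Hp //.
by apply: IH; exact: path_behead Hp.
Qed.

Lemma path_head_adj x y s : is_path E (x :: s) -> y \in s -> [set x; y] \in E ->
  s = y :: behead s.
Proof.
move=> Hp ys He.
have Hp' := path_take (index y s).+1 Hp.
have H1 : path_from E x y (x :: take (index y s).+1 s).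
  split => //=. by rewrite take_index_rcons // last_rcons.
have H2 : path_from E x y [:: x; y] by split => //=; rewrite /pedges /= He.
have := path_unique H1 H2.
case: s {Hp Hp' H1} ys => [|z s] //= _ [->] //.
Qed.


Lemma path_cat_root (K : seq T) r z t : path_from E r z K -> is_path E (z :: t) ->
  head z t \notin K -> is_path E (K ++ t).
Proof.
move=> [HK Hh Hl] Hzt Hy.
case: t Hzt Hy => [|y t'] Hzt Hy; first by rewrite cats0.
have zt : z \notin y :: t' := path_notin Hzt.
have disj : forall w, w \in y :: t' -> w \notin K.
  move=> w wt; apply/negP => wK.
  have wz : w != z by apply: contraNneq zt => <-.
  set i := index w K.
  have iK : (i < size K)%N by rewrite index_mem.
  have HdK := path_drop HK iK.
  have Hd : drop i K = w :: drop i.+1 K by rewrite /i drop_index.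
  have Hlast : last w (drop i.+1 K) = z.
    by rewrite -Hl -{2}(cat_take_drop i K) last_cat Hd.
  case Hd' : (drop i.+1 K) Hlast => [|y' d3] Hlast.
    by move: wz; rewrite -Hlast /= eqxx.
  move: Hlast; rewrite /= => Hlast.
  have Hrc : drop i K = rcons (w :: belast y' d3) z.
    by rewrite Hd Hd' /= (lastI y' d3) Hlast.
  have Hrev := path_rev HdK.
  rewrite Hrc rev_rcons in Hrev.
  have P1 : path_from E z w (z :: rev (w :: belast y' d3)).
    by split => //=; rewrite rev_cons last_rcons.
  have Hpt := path_take (index w (y :: t')).+1 Hzt.
  have P2 : path_from E z w (z :: take (index w (y :: t')).+1 (y :: t')).
    by split => //; rewrite last_cons take_index_rcons // last_rcons.
  have := path_unique P1 P2.
  move=> [Heq].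
  have ym : y \in rev (w :: belast y' d3) by rewrite Heq /= in_cons eqxx.
  move: Hy; rewrite /= => /negP; apply.
  have : y \in drop i K by rewrite Hrc mem_rcons in_cons -mem_rev ym orbT.
  exact: mem_drop.
case: K HK Hh Hl disj Hy => [|r' k] // HK Hh Hl disj _.
move: HK Hzt => /andP[Ha1 Hu1] /andP[Ha2 Hu2].
have Hc : pedges r' (k ++ y :: t') = pedges r' k ++ pedges z (y :: t').
  by rewrite /pedges pairmap_cat -Hl.
apply/andP; rewrite Hc all_cat Ha1 Ha2 cat_uniq Hu1 Hu2 andbT; split => //.
apply/and3P; split => //; apply/hasPn => eps He2; apply/negP => He1.
have epsE : eps \in E := allP Ha2 _ He2.
have [c ce cz] := edge_other z epsE.
have := mem_pedges He2 ce; rewrite in_cons (negbTE cz) /= => ct.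
by move: (disj c ct); rewrite (mem_pedges He1 ce).
Qed.

Lemma dichotomy a b al : [set a; b] \in E -> a != b ->
  gamma E a al = a :: gamma E b al \/ gamma E b al = b :: gamma E a al.
Proof.
move=> He ab.
have [s [Hg Hl]] := gamma_cons b al.
have Hp := gamma_path b al; rewrite Hg in Hp.
case: (boolP ([set a; b] \in pedges b s)) => Hin.
  have : a \in b :: s by apply: (mem_pedges Hin); rewrite in_set2 eqxx.
  rewrite in_cons (negbTE ab) /= => as_.
  have He' : [set b; a] \in E by rewrite setUC.
  have Hs := path_head_adj Hp as_ He'.
  right; rewrite Hg; congr cons; symmetry; apply: gamma_eq.
  rewrite Hs in Hp Hl *; split => //; exact: path_behead Hp.
left; rewrite Hg; apply: gamma_eq; split => //=.
by move: Hp; rewrite /= /pedges /= He Hin => ->.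
Qed.

End Paths.

Section Prods.
Variable T : finType.
Variable E : {set {set T}}.
Hypothesis Htree : is_tree [set: T] E.
Variable q : {set T} -> T -> int.
Local Open Scope ring_scope.

Lemma prod_split (a b : T) s : is_path E (a :: b :: s) ->
  \prod_(eps in E | incident E eps (a :: b :: s)) qinc q eps (a :: b :: s) =
    Qf E q [set a; b] a *
    \prod_(eps in E | incident E eps (b :: s) && (eps != [set a; b])) qinc q eps (b :: s) /\
  \prod_(eps in E | incident E eps (b :: s)) qinc q eps (b :: s) =
    q [set a; b] b *
    \prod_(eps in E | incident E eps (b :: s) && (eps != [set a; b])) qinc q eps (b :: s).
Proof.
move=> Hp.
set e := [set a; b].
have He : e \in E by move: Hp => /andP[/andP[]].
have Hnot : e \notin pedges b s by move: Hp => /andP[_ /andP[]].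
have aS : a \notin b :: s := path_notin Htree Hp.
have K1 : forall eps u, eps \in E -> a \in eps -> eps != e -> u \in b :: s -> u \notin eps.
  move=> eps u epsE ae ne us; apply/negP => ue.
  have ua : a != u by apply: contraNneq aS => ->.
  have Heps := edge_eq Htree epsE ae ue ua.
  have HeE : [set a; u] \in E by rewrite -Heps.
  have Hs := path_head_adj Htree Hp us HeE.
  case: Hs => Hbu.
  by move: ne; rewrite Heps /e Hbu eqxx.
have Hpe : path_edges (a :: b :: s) = e :: pedges b s by [].
split.
- rewrite (bigID [pred eps : {set T} | a \in eps]) /=; congr (_ * _).
  + apply: eq_big => eps.
      rewrite /incident Hpe.
      case epsE: (eps \in E) => //=; case ae: (a \in eps); rewrite ?andbF ?andbT //=.
      rewrite in_cons negb_or.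
      case: (eqVneq eps e) => //= ne.
      apply/negP => Hin.
      by move: aS; rewrite (mem_pedges Hin ae).
    move=> /andP[/andP[epsE Hinc] ae].
    have ne : eps != e.
      by move: Hinc; rewrite /incident Hpe in_cons => /and3P[_ /norP[]].
    rewrite /qinc; case: pickP => [u /andP[]|H].
      rewrite in_cons => /orP[/eqP -> //| us ue].
      by move: (K1 _ _ epsE ae ne us); rewrite ue.
    by move: (H a); rewrite in_cons eqxx ae.
  + apply: eq_big => eps.
      rewrite /incident Hpe.
      case epsE: (eps \in E) => //=; case ae: (a \in eps); rewrite ?andbF ?andbT //=.
        symmetry; apply/negbTE/negP => /andP[/andP[_ Hh] ne].
        have : has (fun u => u \in eps) (b :: s) by [].
        move=> /hasP [u us ue].
        by move: (K1 _ _ epsE ae ne us); rewrite ue.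
      rewrite in_cons negb_or; case: (eqVneq eps e) => _; by rewrite ?andbT ?andbF.
    move=> /andP[_ ae].
    rewrite /qinc; congr oapp; apply: eq_pick => u /=.
    rewrite in_cons; case: (eqVneq u a) => [->|] //=.
    by rewrite (negbTE ae) andbF.
- rewrite (bigD1 e) /=; first congr (_ * _).
  + rewrite /qinc; case: pickP => [u /andP[us]|H].
      rewrite in_set2 => /orP[/eqP ua|/eqP -> //].
      by move: aS; rewrite -ua us.
    by move: (H b); rewrite in_cons eqxx in_set2 eqxx orbT.
  + by apply: eq_bigl => eps; rewrite andbA.
  rewrite He /=; apply/and3P; split => //=; by rewrite in_set2 eqxx orbT.
Qed.

End Prods.

Section Main.
Variable T : finType.
Variables (V A : {set T}) (E : {set {set T}}) (f : T -> int) (q : {set T} -> T -> int) (v0 : T).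
Hypothesis Hdt : decorated_tree V A E f q.
Hypothesis Hrt : is_root V A E f q v0.
Hypothesis Hneg : negative_determinants V E q.
Local Open Scope ring_scope.
Hypothesis Hf : forall a, a \in A -> 0 <= f a.

Let Htree : is_tree [set: T] E.
Proof. by case: Hdt. Qed.

Lemma notA_edges u e1 e2 : u \in A -> e1 \in E -> e2 \in E -> u \in e1 -> u \in e2 -> e1 = e2.
Proof.
move=> uA H1 H2 u1 u2.
case: Hdt => _ _ Harr _ _.
have /eqP /cards1P [x Hx] := Harr u uA.
have : e1 \in [set e in E | u \in e] by rewrite inE H1 u1.
have : e2 \in [set e in E | u \in e] by rewrite inE H2 u2.
by rewrite Hx !in_set1 => /eqP -> /eqP ->.
Qed.

Lemma inV_notA u : u \notin A -> u \in V.
Proof.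
case: Hdt => [[_ HU]] _ _ _ _ uA.
have : u \in V :|: A by rewrite HU in_setT.
by rewrite in_setU (negbTE uA) orbF.
Qed.

Lemma inV_A u : u \in V -> u \notin A.
Proof.
case: Hdt => [[Hd _]] _ _ _ _ uV.
by rewrite (disjointFr Hd uV).
Qed.

Lemma path_adj (x : T) s u : s != [::] -> u \in x :: s -> exists2 eps, eps \in pedges x s & u \in eps.
Proof.
elim: s x => [|y s IH] x // _.
rewrite in_cons => /orP[/eqP ->|].
  by exists [set x; y]; rewrite ?in_cons ?eqxx ?in_set2 ?eqxx.
case: s IH => [|z s] IH.
  rewrite in_cons orbF => /eqP ->.
  by exists [set x; y]; rewrite ?in_cons ?eqxx ?in_set2 ?eqxx ?orbT.
move=> /IH [//|eps He ue].
by exists eps => //; rewrite /pedges /= in_cons He orbT.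
Qed.

Lemma path_prefix (x : T) h y : is_path E (x :: rcons h y) -> is_path E (x :: h).
Proof.
move=> /(path_take (size h)).
by rewrite -cats1 take_size_cat.
Qed.

Lemma desc p v' al : gamma E v0 v' = rcons (gamma E v0 p) v' -> v' \in gamma E v0 al ->
  gamma E v0 al = gamma E v0 p ++ gamma E v' al.
Proof.
move=> Hv' Hin.
set G := gamma E v0 al.
set i := index v' G.
have [s [HG Hl]] := gamma_cons Htree v0 al.
have iG : (i < size G)%N by rewrite index_mem.
have Htake : take i.+1 G = rcons (take i G) v' by rewrite take_index_rcons.
have Hpt : path_from E v0 v' (take i.+1 G).
  split.
  - rewrite /G HG /=. apply: path_take. by rewrite -HG; exact: gamma_path.
  - by rewrite /G HG.
  - by rewrite Htake last_rcons.
have Hg1 := gamma_eq Htree Hpt.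
rewrite Hv' Htake in Hg1.
have Hp := rcons_inj Hg1. case: Hp => Hp.
have Hd : drop i G = v' :: drop i.+1 G by rewrite /i drop_index.
have Hpd : path_from E v' al (drop i G).
  split.
  - apply: path_drop => //; exact: gamma_path.
  - by rewrite Hd.
  - rewrite Hd /=.
    have := last_cat v0 (take i G) (drop i G).
    rewrite cat_take_drop Hd /= => <-.
    by rewrite /G HG /= Hl.
by rewrite (gamma_eq Htree Hpd) Hp cat_take_drop.
Qed.

Lemma path_suffix (B : seq T) x t : is_path E (B ++ x :: t) -> is_path E (x :: t).
Proof.
move=> Hp; have := path_drop Hp (_ : (size B < size (B ++ x :: t))%N).
rewrite drop_size_cat //; apply; by rewrite size_cat /= addnS ltnS leq_addr.
Qed.

Lemma desc_cons p v' al : gamma E v0 v' = rcons (gamma E v0 p) v' -> v' \in gamma E v0 al ->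
  gamma E p al = p :: gamma E v' al.
Proof.
move=> Hv' Hin.
have Hc := desc Hv' Hin.
have [h [HH Hlh]] := gamma_cons Htree v0 p.
have [s [HG Hl]] := gamma_cons Htree v0 al.
have Hcat : gamma E v0 al = belast v0 h ++ p :: gamma E v' al.
  by rewrite Hc HH lastI Hlh cat_rcons.
apply: gamma_eq => //; split => //.
- apply: (@path_suffix (belast v0 h)); rewrite -Hcat; exact: gamma_path.
- have := Hl; rewrite -[last v0 s]/(last v0 (v0 :: s)) -HG Hcat last_cat /=.
  by [].
Qed.

Lemma R_pos p v' al : v' \in V -> al \in A ->
  gamma E v0 v' = rcons (gamma E v0 p) v' -> v' \in gamma E v0 al ->
  0 < \prod_(eps in E | incident E eps (gamma E v' al) && (eps != [set p; v']))
        qinc q eps (gamma E v' al).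
Proof.
move=> v'V alA Hv' Hin.
have Hdesc := desc Hv' Hin.
have Hdc := desc_cons Hv' Hin.
have HuG : uniq (gamma E v0 al) := path_uniq Htree (gamma_path Htree v0 al).
move: HuG; rewrite Hdesc cat_uniq => /and3P [_ Hdisj _].
have [h [HH Hlh]] := gamma_cons Htree v0 p.
have [g' [Hg Hlg]] := gamma_cons Htree v' al.
have Hpg : is_path E (p :: gamma E v' al) by rewrite -Hdc; exact: gamma_path.
have v'H : v' \notin gamma E v0 p.
  have := path_uniq Htree (gamma_path Htree v0 v').
  by rewrite Hv' rcons_uniq => /andP[].
have g'n : g' != [::].
  apply/negP => /eqP g'0; move: Hlg; rewrite g'0 /= => Hal.
  by move: (inV_A v'V); rewrite Hal alA.
apply: prodr_gt0 => eps /andP[epsE /andP[Hinc ne]].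
rewrite /qinc; case: pickP => [u /andP[ug ue] | _] //=.
have Hpe : forall eps', eps' \in path_edges (gamma E v' al) -> eps' \in E.
  move=> eps'; have := gamma_path Htree v' al; rewrite Hg /= => /andP[/allP Ha _].
  exact: Ha.
have epsg : eps \notin path_edges (gamma E v' al) by case/and3P: Hinc.
have uV : u \in V.
  apply: inV_notA; apply/negP => uA.
  move: ug; rewrite Hg => ug.
  have [eps' He' ue'] := path_adj g'n ug.
  have He'E : eps' \in E by apply: Hpe; rewrite Hg.
  have Heq := notA_edges uA epsE He'E ue ue'.
  by move: epsg; rewrite Hg Heq /= He'.
have uH : u \notin gamma E v0 p.
  apply/negP => uH; move: Hdisj => /hasP; apply; by exists u.
have uv0 : u != v0.
  by apply: contraNneq uH => ->; rewrite HH in_cons eqxx.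
case: Hrt => _ _ Hroot.
have [Hq1 _] := Hroot u uV uv0.
suff : 1 <= q eps u by move=> H; apply: lt_le_trans H.
apply: Hq1 => //.
set k := (index u (gamma E v' al)).+1.
have Hpath2 : path_from E v0 u (gamma E v0 p ++ take k (gamma E v' al)).
  split.
  - apply: (path_cat_root Htree (gammaP Htree v0 p)).
      exact: path_take.
    by rewrite Hg /k /= .
  - by rewrite HH.
  - rewrite last_cat.
    have -> : last v0 (gamma E v0 p) = p by rewrite HH.
    by rewrite /k take_index_rcons // last_rcons.
rewrite (gamma_eq Htree Hpath2).
rewrite HH /= /pedges pairmap_cat Hlh /k Hg /= -/(pedges v' _) pedges_take.
rewrite mem_cat in_cons !negb_or ne /=.
apply/andP; split.
  apply/negP => Hin2; move: uH; rewrite HH.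
  by rewrite (mem_pedges Hin2 ue).
apply/negP => /mem_take Hin2.
by move: epsg; rewrite Hg /= Hin2.
Qed.

Lemma arith (qq Q d N N' D : int) : qq * N' = Q * N + d * D -> 1 <= qq -> 0 < Q -> d < 0 -> 0 <= D ->
  [/\ N < 0 -> N' < 0, N <= 0 -> N' <= 0 & N <= 0 -> 0 < D -> N' < 0].
Proof. move=> H1 H2 H3 H4 H5; split => H6; [nia|nia|move=> H7; nia]. Qed.

Lemma step p v' : p \in V -> v' \in V -> gamma E v0 v' = rcons (gamma E v0 p) v' ->
  [/\ Nf A E f q p < 0 -> Nf A E f q v' < 0,
      Nf A E f q p <= 0 -> Nf A E f q v' <= 0 &
      Nf A E f q p <= 0 ->
        (exists2 a, (a \in A) && (f a != 0) & v' \in gamma E v0 a) -> Nf A E f q v' < 0].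
Proof.
move=> pV v'V Hv'.
set e := [set p; v'].
have [h [HH Hlh]] := gamma_cons Htree v0 p.
have HP := gamma_path Htree v0 v'.
have Hpe : path_edges (gamma E v0 v') = rcons (pedges v0 h) e.
  by rewrite Hv' HH /= pedges_rcons Hlh.
have HP' : is_path E (v0 :: rcons h v') by rewrite -rcons_cons -HH -Hv'.
move: (HP') => /andP[Ha Hu]; rewrite pedges_rcons Hlh -/e in Ha Hu.
have eE : e \in E by apply: (allP Ha); rewrite mem_rcons in_cons eqxx.
have eH : e \notin pedges v0 h by move: Hu; rewrite rcons_uniq => /andP[].
have v'H : v' \notin gamma E v0 p.
  have := path_uniq Htree HP.
  by rewrite Hv' rcons_uniq => /andP[].
have pv' : p != v'.
  by apply: contraNneq v'H => <-; rewrite HH -Hlh mem_last.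
have v'v0 : v' != v0.
  by apply: contraNneq v'H => ->; rewrite HH in_cons eqxx.
case: Hrt => Hv0V Hv0q Hroot.
have Hqp : 1 <= q e p.
  case: (eqVneq p v0) => [Hp0|pv0].
    by have := Hv0q e eE; rewrite -Hp0 => -> //; rewrite in_set2 eqxx.
  apply: (Hroot p pV pv0).1 => //; first by rewrite in_set2 eqxx.
  by rewrite HH.
have HQ : 0 < Qf E q e v'.
  apply: prodr_gt0 => e' /andP[e'E /andP[v'e' ne']].
  suff : 1 <= q e' v' by move=> H; apply: lt_le_trans H.
  apply: (Hroot v' v'V v'v0).1 => //.
  rewrite Hpe mem_rcons in_cons (negbTE ne') /=.
  apply/negP => Hin; move: v'H; rewrite HH.
  by rewrite (mem_pedges Hin v'e').
have Hdet : detf E q p v' < 0 := @Hneg p v' pV v'V eE.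
pose R a := \prod_(eps in E | incident E eps (gamma E v' a) && (eps != e)) qinc q eps (gamma E v' a).
pose c a := if v' \in gamma E v0 a then f a * R a else 0.
have Hid : forall a, a \in A -> q e p * xf E f q v' a = Qf E q e v' * xf E f q p a + detf E q p v' * c a.
  move=> a aA.
  case: (@dichotomy T E Htree p v' a eE pv') => Hc.
    have [g' [Hg _]] := gamma_cons Htree v' a.
    have Hp2 : is_path E (p :: v' :: g') by rewrite -Hg -Hc; exact: gamma_path.
    have [S1 S2] := prod_split Htree q Hp2.
    have Hin : v' \in gamma E v0 a.
      have Hpc : is_path E (p :: gamma E v' a) by rewrite -Hc; exact: gamma_path.
      have Hcat := path_cat_root Htree (gammaP Htree v0 p) Hpc.
      have Hcat' : is_path E (gamma E v0 p ++ gamma E v' a) by apply: Hcat; rewrite Hg.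
      have Hpf : path_from E v0 a (gamma E v0 p ++ gamma E v' a).
        split => //; first by rewrite HH.
        rewrite last_cat (_ : last v0 (gamma E v0 p) = p); last by rewrite HH.
        rewrite Hg /=.
        by case: (gammaP Htree v' a); rewrite Hg.
      by rewrite (gamma_eq Htree Hpf) mem_cat Hg in_cons eqxx orbT.
    rewrite /xf /= Hc Hg S1 S2 /c Hin /R Hg /detf /= -/e.
    ring.
  have [g' [Hg _]] := gamma_cons Htree p a.
  have Hp2 : is_path E (v' :: p :: g') by rewrite -Hg -Hc; exact: gamma_path.
  have [S1 S2] := prod_split Htree q Hp2.
  have Ee : [set v'; p] = e by rewrite /e setUC.
  rewrite Ee in S1 S2.
  have Hc0 : c a = 0.
    rewrite /c; case: ifP => // Hin.
    have := desc_cons Hv' Hin; rewrite Hc => /(congr1 size) /=.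
    move=> H; have := leqW (ltnSn (size (gamma E p a))); by rewrite -H ltnn.
  rewrite Hc0 /xf /= Hc Hg S1 S2 /detf /= -/e.
  ring.
set D := \sum_(a in A | f a != 0) c a.
have Hsum : q e p * Nf A E f q v' = Qf E q e v' * Nf A E f q p + detf E q p v' * D.
  rewrite /Nf /D !mulr_sumr -big_split /=.
  apply: eq_bigr => a /andP[aA _]; exact: Hid.
have Hc0 : forall a, a \in A -> 0 <= c a.
  move=> a aA; rewrite /c; case: ifP => // Hin.
  apply: mulr_ge0; first exact: Hf.
  exact: ltW (R_pos v'V aA Hv' Hin).
have HD : 0 <= D by apply: sumr_ge0 => a /andP[aA _]; exact: Hc0.
have HDp : (exists2 a, (a \in A) && (f a != 0) & v' \in gamma E v0 a) -> 0 < D.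
  move=> [a /andP[aA fa] Hin].
  rewrite /D (bigD1 a) /=; last by rewrite aA.
  have h1 : 0 < c a.
    rewrite /c Hin; apply: mulr_gt0; last exact: (R_pos v'V aA Hv' Hin).
    by rewrite lt_def fa Hf.
  apply: ltr_wpDr h1.
  by apply: sumr_ge0 => i /andP[/andP[iA _] _]; exact: Hc0.
have [A1 A2 A3] := arith Hsum Hqp HQ Hdet HD.
split => // HN Hex; exact: A3 (HDp Hex).
Qed.

Lemma chain n v v' : (size (gamma E v0 v') <= n)%N -> v \in V -> v' \in V -> tlt E v0 v v' ->
  [/\ Nf A E f q v < 0 -> Nf A E f q v' < 0,
      Nf A E f q v <= 0 -> Nf A E f q v' <= 0 &
      (Nf A E f q v <= 0 ->
       (exists2 a, (a \in A) && (f a != 0) & tlt E v0 v' a) ->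
       Nf A E f q v' < 0)].
Proof.
elim: n v v' => [|n IH] v v' Hs vV v'V /andP[vv' vin].
  by have [s [HG _]] := gamma_cons Htree v0 v'; rewrite HG in Hs.
have [s [HG Hl]] := gamma_cons Htree v0 v'.
case/lastP: s HG Hl => [|h y] HG Hl.
  by move: vin; rewrite HG /= in_cons orbF => /eqP vv; move: vv'; rewrite vv -Hl eqxx.
rewrite last_rcons in Hl; subst y.
set p := last v0 h.
have HP := gamma_path Htree v0 v'.
have Hgp : gamma E v0 p = v0 :: h.
  apply: gamma_eq => //; split => //.
  apply: (@path_prefix v0 h v'); by rewrite -HG.
have Hv' : gamma E v0 v' = rcons (gamma E v0 p) v' by rewrite HG Hgp.
have vH : v \in v0 :: h.
  by move: vin; rewrite Hv' Hgp mem_rcons in_cons (negbTE vv').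
have Hex : (exists2 a, (a \in A) && (f a != 0) & tlt E v0 v' a) ->
           (exists2 a, (a \in A) && (f a != 0) & v' \in gamma E v0 a).
  by move=> [a Ha /andP[_ Hin]]; exists a.
case: (eqVneq v p) => [Hvp|vp].
  have pV : p \in V by rewrite -Hvp.
  have [S1 S2 S3] := step pV v'V Hv'.
  rewrite Hvp; split => // HN H; exact: S3 (Hex H).
have pV : p \in V.
  apply: inV_notA; apply/negP => pA.
  have [h2 Hh2] : exists h2, h = rcons h2 p.
    case Hh : h => [|z h'].
      by move: vH vp; rewrite /p Hh in_cons orbF => /eqP ->; rewrite eqxx.
    by exists (belast z h'); rewrite /p Hh /= -lastI.
  move: HP; rewrite HG /= Hh2 !pedges_rcons !last_rcons => /andP[Ha Hu].
  have e1E : [set last v0 h2; p] \in E by apply: (allP Ha); rewrite mem_rcons in_cons mem_rcons in_cons eqxx orbT.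
  have e2E : [set p; v'] \in E by apply: (allP Ha); rewrite mem_rcons in_cons eqxx.
  have Heq := notA_edges pA e1E e2E.
  move: Hu; rewrite rcons_uniq mem_rcons in_cons Heq ?eqxx //.
  - by rewrite in_set2 eqxx orbT.
  - by rewrite in_set2 eqxx.
have [S1 S2 S3] := step pV v'V Hv'.
have Hsz : (size (gamma E v0 p) <= n)%N.
  by move: Hs; rewrite HG Hgp /= size_rcons.
have Htlt : tlt E v0 v p by rewrite /tlt vp Hgp.
have [I1 I2 I3] := IH v p Hsz vV pV Htlt.
split => [HN|HN|HN H].
- exact: S1 (I1 HN).
- exact: S2 (I2 HN).
- exact: S3 (I2 HN) (Hex H).
Qed.

Lemma conn_interior x s i : is_path E (x :: s) -> (0 < i < size s)%N ->
  nth x (x :: s) i \in V /\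
  (tlt E v0 (nth x (x :: s) i) x \/ tlt E v0 (nth x (x :: s) i) (last x s)).
Proof.
move=> HP /andP[i0 Hi].
case: i i0 Hi => [|i'] // _ Hi.
rewrite [nth x (x :: s) i'.+1]/=.
set z := nth x s i'.
have HuP := path_uniq Htree HP.
have Hsplit : s = take i' s ++ z :: drop i'.+1 s.
  by rewrite /z -drop_nth ?cat_take_drop // ltnW.
set l' := take i' s.
set r := drop i'.+1 s.
have : (0 < size r)%N by rewrite /r size_drop subn_gt0.
case Hr : r => [|y1 r1] // _.
rewrite Hsplit -cat_cons cat_uniq in HuP; case/and3P: HuP => _ Hd Hzr.
have zr : z \notin r by move: Hzr; rewrite /= => /andP[].
have zl : z \notin x :: l' by apply: contra Hd => H; apply/hasP; exists z; rewrite ?in_cons ?eqxx.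
have rl : forall w, w \in r -> w \notin x :: l'.
  move=> w wr; apply: contra Hd => H; apply/hasP; exists w => //; by rewrite in_cons wr orbT.
have Hpzr : is_path E (z :: r).
  apply: (@path_suffix (x :: l')); by rewrite cat_cons -Hsplit.
have Hplz : is_path E (x :: rcons l' z).
  have := path_take (size (rcons l' z)) HP.
  by rewrite Hsplit -cat_rcons take_size_cat.
have Hrev := path_rev Hplz.
rewrite -rcons_cons rev_rcons in Hrev.
set x1 := last x l'.
have Hrl : rev (x :: l') = x1 :: rev (belast x l') by rewrite (lastI x l') rev_rcons.
have x1l : x1 \in x :: l' by rewrite mem_last.
have e1 : [set z; y1] \in E by move: Hpzr; rewrite Hr /= => /andP[/andP[]].
have e2 : [set z; x1] \in E by move: Hrev; rewrite Hrl /= => /andP[/andP[]].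
have y1r : y1 \in r by rewrite Hr in_cons eqxx.
have x1y1 : x1 != y1 by apply: contraNneq (rl _ y1r) => <-.
have x1z : x1 != z by apply: contraNneq zl => <-.
have y1z : y1 != z by apply: contraNneq zr => <-.
split.
  apply: inV_notA; apply/negP => zA.
  have Heq := notA_edges zA e1 e2 (setU11 _ _) (setU11 _ _).
  have : x1 \in [set z; y1] by rewrite Heq in_set2 eqxx orbT.
  by rewrite in_set2 (negbTE x1z) (negbTE x1y1).
have [k [HK HlK]] := gamma_cons Htree v0 z.
have HKP := gamma_path Htree v0 z.
have zK : z \in gamma E v0 z by rewrite HK -HlK mem_last.
have : (y1 \notin gamma E v0 z) || (x1 \notin gamma E v0 z).
  rewrite -negb_and; apply/negP => /andP[y1K x1K].
  have HKr : gamma E v0 z = rcons (belast v0 k) z by rewrite HK lastI HlK.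
  have HrK := path_rev HKP; rewrite HKr rev_rcons in HrK.
  have y1b : y1 \in rev (belast v0 k).
    by move: y1K; rewrite HKr mem_rcons in_cons (negbTE y1z) mem_rev.
  have x1b : x1 \in rev (belast v0 k).
    by move: x1K; rewrite HKr mem_rcons in_cons (negbTE x1z) mem_rev.
  have H1 := path_head_adj Htree HrK y1b e1.
  have H2 := path_head_adj Htree HrK x1b e2.
  by move: x1y1; rewrite H1 in H2; case: H2 => ->; rewrite eqxx.
case/orP => [y1K|x1K].
  right.
  have Hc : is_path E (gamma E v0 z ++ r).
    apply: (path_cat_root Htree (gammaP Htree v0 z) Hpzr); by rewrite Hr.
  have Hpf : path_from E v0 (last z r) (gamma E v0 z ++ r).
    split => //; first by rewrite HK.
    by rewrite last_cat (_ : last v0 (gamma E v0 z) = z) // HK.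
  have Hls : last x s = last z r.
    by rewrite Hsplit last_cat.
  rewrite /tlt Hls (gamma_eq Htree Hpf) mem_cat zK andbT.
  apply: contraNneq zr => ->; by rewrite Hr /= mem_last.
left.
have Hzl : is_path E (z :: rev (x :: l')) by [].
have Hc : is_path E (gamma E v0 z ++ rev (x :: l')).
  apply: (path_cat_root Htree (gammaP Htree v0 z) Hzl); by rewrite Hrl.
have Hpf : path_from E v0 x (gamma E v0 z ++ rev (x :: l')).
  split => //; first by rewrite HK.
  by rewrite last_cat rev_cons last_rcons.
rewrite /tlt (gamma_eq Htree Hpf) mem_cat zK andbT.
by apply: contraNneq zl => ->; rewrite in_cons eqxx.
Qed.

End Main.

Local Open Scope ring_scope.

Theorem corollary5p9 (T : finType) (V A : {set T}) (E : {set {set T}})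
  (f : T -> int) (q : {set T} -> T -> int) (v0 : T) :
  decorated_rooted_tree V A E f q v0 ->
  negative_determinants V E q ->
  (forall a, a \in A -> 0 <= f a) ->
  [/\ (forall v v', v \in V -> v' \in V -> tlt E v0 v v' ->
        [/\ Nf A E f q v < 0 -> Nf A E f q v' < 0,
            Nf A E f q v <= 0 -> Nf A E f q v' <= 0 &
            (Nf A E f q v <= 0 ->
             (exists2 a, (a \in A) && (f a != 0) & tlt E v0 v' a) ->
             Nf A E f q v' < 0)]),
      connected E [set v in V | 0 <= Nf A E f q v] &
      connected E [set v in V | 0 < Nf A E f q v]].
Proof.
move=> [Hdt Hrt] Hneg Hf.
have Hch : forall v v', v \in V -> v' \in V -> tlt E v0 v v' ->
        [/\ Nf A E f q v < 0 -> Nf A E f q v' < 0,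
            Nf A E f q v <= 0 -> Nf A E f q v' <= 0 &
            (Nf A E f q v <= 0 ->
             (exists2 a, (a \in A) && (f a != 0) & tlt E v0 v' a) ->
             Nf A E f q v' < 0)].
  move=> v v' vV v'V Ht; exact: (chain Hdt Hrt Hneg Hf (leqnn _) vV v'V Ht).
split => //.
- move=> x s Hp; rewrite !inE => /andP[xV Nx] /andP[yV Ny] i Hi.
  have [zV Ht] := conn_interior v0 Hdt Hp Hi.
  rewrite inE zV /= leNgt; apply/negP => Hz.
  case: Ht => Ht.
    have [C1 _ _] := Hch _ _ zV xV Ht.
    by move: Nx; rewrite leNgt (C1 Hz).
  have [C1 _ _] := Hch _ _ zV yV Ht.
  by move: Ny; rewrite leNgt (C1 Hz).
- move=> x s Hp; rewrite !inE => /andP[xV Nx] /andP[yV Ny] i Hi.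
  have [zV Ht] := conn_interior v0 Hdt Hp Hi.
  rewrite inE zV /= ltNge; apply/negP => Hz.
  case: Ht => Ht.
    have [_ C2 _] := Hch _ _ zV xV Ht.
    by move: Nx; rewrite ltNge (C2 Hz).
  have [_ C2 _] := Hch _ _ zV yV Ht.
  by move: Ny; rewrite ltNge (C2 Hz).
Qed.
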